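(* The proof system $\mathbf{ELCR}^-$ is sound for $\mathsf{ELCR}^-$: every formula of $\mathcal{L}^-$ derivable in $\mathbf{ELCR}^-$ is valid on the class of all $k$-sight models.
   Context: Fix a natural number $k$ and a vocabulary: $Pred$ (predicate symbols with arities, containing binary $R$), a nonempty finite set $Cons$ of constants, $Var=\{x,y\}$; terms $\mathsf{Term}=Cons\cup Var$. $\mathcal{L}_{\mathsf{B}}$: $\alpha::=P(t_1,\dots,t_m)\mid t_1\equiv t_2\mid\neg\alpha\mid(\alpha\land\alpha)$. $\mathcal{L}^-$: $\varphi::=\alpha\mid K_zt\mid\neg\varphi\mid(\varphi\land\varphi)\mid K_z\alpha$ with $\alpha\in\mathcal{L}_{\mathsf{B}}$, $z\in Var$, $t\in\mathsf{Term}$. $\langle K_z\rangle\beta:=\neg K_z\neg\beta$; $K_z\mathcal{T}:=\bigwedge_{t\in\mathcal{T}}K_zt$; $\alpha[t_1/t_2]$ replaces every occurrence of $t_2$ in $\alpha$ by $t_1$; $t\not\equiv c:=\neg t\equiv c$; $\mathsf{D}^0t_1t_2:=t_1\equiv t_2$, $\mathsf{D}^{n+1}t_1t_2:=\mathsf{D}^nt_1t_2\lor\bigvee_{t\in\mathsf{Term}}(\mathsf{D}^nt_1t\land(Rtt_2\lor Rt_2t))$; for $\mathcal{T}\subseteq Cons$, $K_zz'=\mathcal{T}:=\bigwedge_{c\in\mathcal{T}}\langle K_z\rangle z'\equiv c\land\bigwedge_{c\in Cons\setminus\mathcal{T}}K_z\neg z'\equiv c$. Models: $M=(\mathbf{D},\mathbf{I},\Sigma,\sim)$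 with $\mathbf{D}$ nonempty finite; $\mathbf{I}(P)\subseteq\mathbf{D}^m$ for $m$-ary $P$, $\mathbf{R}:=\mathbf{I}(R)$ serial; $\mathbf{I}(c)\in\mathbf{D}$ for $c\in Cons$, every element of $\mathbf{D}$ named by some constant; $\Sigma\subseteq\mathbf{D}^{Var}$ nonempty (situations); $\sim_x,\sim_y$ equivalence relations on $\Sigma$. $\mathbb{D}^0(s)=\{s\}$, $\mathbb{D}^{m+1}(s)=\mathbb{D}^m(s)\cup\{t:\exists u\in\mathbb{D}^m(s),(u,t)\in\mathbf{R}\text{ or }(t,u)\in\mathbf{R}\}$. $M$ is $k$-sight if $\sigma\sim_z\sigma'$ implies $\sigma(z')=\sigma'(z')$ for every $z'\in Var$ with $\sigma(z')\in\mathbb{D}^k(\sigma(z))$. Semantics: $t^{(\mathbf{I},\sigma)}$ is $\mathbf{I}(t)$ or $\sigma(t)$; $P(t_1,\dots,t_m)$ true iff the tuple of values is in $\mathbf{I}(P)$; $t_1\equiv t_2$ iff equal values; Boolean standard; $K_zt$ true at $\sigma$ iff $t$ has the same value at all $\sigma'\in\Sigma$ with $\sigma'\sim_z\sigma$; $K_z\varphi$ true at $\sigma$ iff $\varphi$ true at all $\sigma'\in\Sigma$ with $\sigma'\sim_z\sigma$. Valid = true at every situation of every $k$-sight model. $\mathbf{ELCR}^-$ has axioms and rules (with $z,z'\in Var$, $t,t_i\in\mathsf{Term}$, $c\in Cons$): (Tau) propositional tautologies; (A1) $t_1\equiv t_1$; (A2) $t_1\equiv t_2\to t_2\equiv t_1$;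 (A3) $t_1\equiv t_2\land t_2\equiv t_3\to t_1\equiv t_3$; (A4) $t_1\equiv t_2\to(\alpha\leftrightarrow\alpha[t_1/t_2])$ for $\alpha\in\mathcal{L}_{\mathsf{B}}$; (MP) from $\varphi\to\psi$ and $\varphi$ infer $\psi$; (Seriality) $\bigvee_{t\in Cons}Rct$; (At-Some-Where) $\bigvee_{c\in Cons}z\equiv c$; ($k$-sight) $\mathsf{D}^kzt\to K_zt$; (K) $K_z(\alpha\to\beta)\to(K_z\alpha\to K_z\beta)$, $\alpha,\beta\in\mathcal{L}_{\mathsf{B}}$; (T) $K_z\alpha\to\alpha$, $\alpha\in\mathcal{L}_{\mathsf{B}}$; (Knowledge-Ground) $K_zz'=\mathcal{T}\to(K_z\alpha\leftrightarrow\bigwedge_{c\in\mathcal{T}}\alpha[c/z'])$ for $\mathcal{T}\subseteq Cons$, $\{z,z'\}=\{x,y\}$, $\alpha\in\mathcal{L}_{\mathsf{B}}$; (K-Additivity) from $\varphi\to\alpha$ infer $\varphi\to K_z\alpha$, where $\varphi=K_z\alpha_1\land\dots\land K_z\alpha_n\land\langle K_z\rangle\beta_1\land\dots\land\langle K_z\rangle\beta_m$, $1\le m+n$, $\alpha,\alpha_i,\beta_j\in\mathcal{L}_{\mathsf{B}}$; (K-Elimination) from $\varphi\to(K_z\alpha\to\beta)$ infer $\varphi\to(\alpha\to\beta)$, where $\varphi=K_{z'}\alpha_1\land\dots\land K_{z'}\alpha_n\land\langle K_{z'}\rangle\beta_1\land\dots\land\langle K_{z'}\rangle\beta_m$, $1\le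 m+n$, $\alpha,\beta,\alpha_i,\beta_j\in\mathcal{L}_{\mathsf{B}}$, $\{z,z'\}=\{x,y\}$; (De-Re-Knowledge) $t\equiv c\to(K_zt\leftrightarrow K_zt\equiv c)$; (Structure-Knowledge) $(K_z\mathcal{T}\land\alpha)\to K_z\alpha$ for $\alpha\in\mathcal{L}_{\mathsf{B}}$ all of whose terms lie in $\mathcal{T}\subseteq\mathsf{Term}$. *)

(* Defs.v *)
From HB Require Import structures.
From mathcomp Require Import all_boot.
Set Implicit Arguments. Unset Strict Implicit. Unset Printing Implicit Defensive.

Inductive var := vx | vy.
Definition bool_of_var v := if v is vx then true else false.
Definition var_of_bool (b : bool) := if b then vx else vy.
Lemma bool_of_varK : cancel bool_of_var var_of_bool. Proof. by case. Qed.
HB.instance Definition _ := Finite.copy var (can_type bool_of_varK).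

Inductive term (Cons : Type) := TC of Cons | TV of var.
Arguments TV {Cons}.
Definition sum_of_term C (t : term C) : (C + var)%type :=
  match t with TC c => inl c | TV z => inr z end.
Definition term_of_sum C (s : (C + var)%type) : term C :=
  match s with inl c => TC c | inr z => TV z end.
Lemma sum_of_termK C : cancel (@sum_of_term C) (@term_of_sum C). Proof. by case. Qed.
HB.instance Definition _ (C : finType) :=
  Finite.copy (term C) (can_type (@sum_of_termK C)).

Section ELCR.
(* Vocabulary: Cons = finite set of constants; predicate symbols are the
   distinguished binary R together with further symbols OPred with arities. *)
Variables (Cons : finType) (OPred : Type) (oarity : OPred -> nat).
Local Notation term := (term Cons).

Inductive bform :=
| BRel of term & term
| BAtom (P : OPred) of (oarity P).-tuple term
| BEq of term & term
| BNeg of bform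
| BAnd of bform & bform.

Definition bTrue : bform := BEq (TV vx) (TV vx).
Definition bFalse : bform := BNeg bTrue.
Definition bOr a b := BNeg (BAnd (BNeg a) (BNeg b)).
Definition bImp a b := BNeg (BAnd a (BNeg b)).
Definition bIff a b := BAnd (bImp a b) (bImp b a).
Fixpoint bBigAnd (s : seq bform) : bform :=
  match s with [::] => bTrue | a :: s' => if s' is [::] then a else BAnd a (bBigAnd s') end.
Fixpoint bBigOr (s : seq bform) : bform :=
  match s with [::] => bFalse | a :: s' => if s' is [::] then a else bOr a (bBigOr s') end.

Fixpoint bsubst (t1 t2 : term) (a : bform) : bform :=
  let sub s := if s == t2 then t1 else s in
  match a with
  | BRel s1 s2 => BRel (sub s1) (sub s2)
  | BAtom P ts => @BAtom P (map_tuple sub ts)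
  | BEq s1 s2 => BEq (sub s1) (sub s2)
  | BNeg b => BNeg (bsubst t1 t2 b)
  | BAnd b c => BAnd (bsubst t1 t2 b) (bsubst t1 t2 c)
  end.

Fixpoint bterms (a : bform) : seq term :=
  match a with
  | BRel s1 s2 => [:: s1; s2]
  | BAtom P ts => tval ts
  | BEq s1 s2 => [:: s1; s2]
  | BNeg b => bterms b
  | BAnd b c => bterms b ++ bterms c
  end.

Fixpoint Dn (n : nat) (t1 t2 : term) : bform :=
  match n with
  | 0 => BEq t1 t2
  | n'.+1 => bOr (Dn n' t1 t2)
                 (bBigOr [seq BAnd (Dn n' t1 t) (bOr (BRel t t2) (BRel t2 t)) | t <- enum {: term}])
  end.

Inductive form :=
| FB of bform
| FKt of var & term
| FNeg of form
| FAnd of form & form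
| FK of var & bform.

Definition fTrue := FB bTrue.
Definition fImp p q := FNeg (FAnd p (FNeg q)).
Definition fIff p q := FAnd (fImp p q) (fImp q p).
Fixpoint fBigAnd (s : seq form) : form :=
  match s with [::] => fTrue | a :: s' => if s' is [::] then a else FAnd a (fBigAnd s') end.
Definition dia (z : var) (b : bform) := FNeg (FK z (BNeg b)).

Definition Kterms (z : var) (T : {set term}) := fBigAnd [seq FKt z t | t <- enum T].
Definition KeqT (z z' : var) (T : {set Cons}) :=
  fBigAnd ([seq dia z (BEq (TV z') (TC c)) | c <- enum T] ++
           [seq FK z (BNeg (BEq (TV z') (TC c))) | c <- enum (~: T)]).
Definition kphi (z : var) (As Bs : seq bform) :=
  fBigAnd (map (FK z) As ++ map (dia z) Bs).

(* propositional evaluation, atoms being the non-Boolean-compound formulas *)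
Fixpoint bpeval (v : form -> bool) (a : bform) : bool :=
  match a with
  | BNeg b => ~~ bpeval v b
  | BAnd b c => bpeval v b && bpeval v c
  | _ => v (FB a)
  end.
Fixpoint fpeval (v : form -> bool) (p : form) : bool :=
  match p with
  | FB a => bpeval v a
  | FNeg q => ~~ fpeval v q
  | FAnd q r => fpeval v q && fpeval v r
  | _ => v p
  end.
Definition tautology (p : form) := forall v, fpeval v p.

Inductive derivable (k : nat) : form -> Prop :=
| dTau p : tautology p -> derivable k p
| dA1 t : derivable k (FB (BEq t t))
| dA2 t1 t2 : derivable k (FB (bImp (BEq t1 t2) (BEq t2 t1)))
| dA3 t1 t2 t3 :
    derivable k (FB (bImp (BAnd (BEq t1 t2) (BEq t2 t3)) (BEq t1 t3)))
| dA4 t1 t2 a : derivable k (FB (bImp (BEq t1 t2) (bIff a (bsubst t1 t2 a))))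
| dMP p q : derivable k (fImp p q) -> derivable k p -> derivable k q
| dSeriality c : derivable k (FB (bBigOr [seq BRel (TC c) (TC d) | d <- enum {: Cons}]))
| dAtSomeWhere z : derivable k (FB (bBigOr [seq BEq (TV z) (TC c) | c <- enum {: Cons}]))
| dKsight z t : derivable k (fImp (FB (Dn k (TV z) t)) (FKt z t))
| dK z a b : derivable k (fImp (FK z (bImp a b)) (fImp (FK z a) (FK z b)))
| dT z a : derivable k (fImp (FK z a) (FB a))
| dKGround z z' (T : {set Cons}) a : z != z' ->
    derivable k (fImp (KeqT z z' T)
                      (fIff (FK z a) (FB (bBigAnd [seq bsubst (TC c) (TV z') a | c <- enum T]))))
| dKAdditivity z As Bs a : 0 < size As + size Bs ->
    derivable k (fImp (kphi z As Bs) (FB a)) ->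
    derivable k (fImp (kphi z As Bs) (FK z a))
| dKElimination z z' As Bs a b : z != z' -> 0 < size As + size Bs ->
    derivable k (fImp (kphi z' As Bs) (fImp (FK z a) (FB b))) ->
    derivable k (fImp (kphi z' As Bs) (fImp (FB a) (FB b)))
| dDeRe z t c :
    derivable k (fImp (FB (BEq t (TC c))) (fIff (FKt z t) (FK z (BEq t (TC c)))))
| dStructure z (T : {set term}) a : all (mem T) (bterms a) ->
    derivable k (fImp (FAnd (Kterms z T) (FB a)) (FK z a)).

Record model := Model {
  dom : finType;
  dom_nonempty : 0 < #|dom|;
  IR : rel dom;
  IR_serial : forall d, exists d', IR d d';
  IP : forall P : OPred, (oarity P).-tuple dom -> bool;
  IC : Cons -> dom;
  IC_named : forall d, exists c, IC c = d;
  sits : {set {ffun var -> dom}};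
  sits_nonempty : sits != set0;
  sim : var -> {ffun var -> dom} -> {ffun var -> dom} -> Prop;
  sim_refl : forall z s, s \in sits -> sim z s s;
  sim_sym : forall z s s', s \in sits -> s' \in sits -> sim z s s' -> sim z s' s;
  sim_trans : forall z s1 s2 s3, s1 \in sits -> s2 \in sits -> s3 \in sits ->
                sim z s1 s2 -> sim z s2 s3 -> sim z s1 s3
}.

Section Semantics.
Variable M : model.
Local Notation D := (dom M).

Definition tval (s : {ffun var -> D}) (t : term) : D :=
  match t with TC c => @IC M c | TV z => s z end.

Fixpoint Dset (m : nat) (d : D) : pred D :=
  match m with
  | 0 => pred1 d
  | m'.+1 => fun e => Dset m' d e || [exists u, Dset m' d u && (@IR M u e || @IR M e u)]
  end.

Fixpoint bsat (s : {ffun var -> D}) (a : bform) : bool :=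
  match a with
  | BRel t1 t2 => @IR M (tval s t1) (tval s t2)
  | BAtom P ts => @IP M P (map_tuple (tval s) ts)
  | BEq t1 t2 => tval s t1 == tval s t2
  | BNeg b => ~~ bsat s b
  | BAnd b c => bsat s b && bsat s c
  end.

Fixpoint fsat (s : {ffun var -> D}) (p : form) : Prop :=
  match p with
  | FB a => bsat s a
  | FKt z t => forall s', s' \in @sits M -> @sim M z s' s -> tval s' t = tval s t
  | FNeg q => ~ fsat s q
  | FAnd q r => fsat s q /\ fsat s r
  | FK z a => forall s', s' \in @sits M -> @sim M z s' s -> bsat s' a
  end.

Definition ksight (k : nat) : Prop :=
  forall z s s', s \in @sits M -> s' \in @sits M -> @sim M z s s' ->
    forall z', s z' \in Dset k (s z) -> s z' = s' z'.
End Semantics.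

Definition valid (k : nat) (p : form) : Prop :=
  forall M : model, ksight M k -> forall s, s \in @sits M -> fsat s p.
End ELCR.

(* Main.v *)
Require Import Defs.
From HB Require Import structures.
From mathcomp Require Import all_boot.
From Stdlib Require Import Classical ClassicalEpsilon.
Set Implicit Arguments. Unset Strict Implicit.

Lemma bsat_bigOr {C : finType} {O : Type} {ar : O -> nat} (M : model C ar) s l :
  bsat (M:=M) s (bBigOr l) = has (bsat s) l.
Proof.
elim: l => [|a l IH] /=; first by rewrite eqxx.
case: l IH => [|b l] IH; first by rewrite /= orbF.
transitivity (bsat s a || bsat s (bBigOr (b :: l))); first by rewrite /= negb_and !negbK.
by rewrite IH.
Qed.

Lemma bsat_bigAnd {C : finType} {O : Type} {ar : O -> nat} (M : model C ar) s l :
  bsat (M:=M) s (bBigAnd l) = all (bsat s) l.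
Proof.
elim: l => [|a l IH] /=; first by rewrite eqxx.
case: l IH => [|b l] IH; first by rewrite /= andbT.
transitivity (bsat s a && bsat s (bBigAnd (b :: l))); first by [].
by rewrite IH.
Qed.

Lemma fsat_bigAnd {C : finType} {O : Type} {ar : O -> nat} (M : model C ar) s l :
  fsat (M:=M) s (fBigAnd l) <-> (forall q, List.In q l -> fsat s q).
Proof.
elim: l => [|a l IH] /=; first by split=> // _; rewrite /= eqxx.
case: l IH => [|b l] IH.
  split; first by move=> H q [<-|[]].
  by move=> H; apply: H; left.
split.
  move=> [Ha Hl] q [<-|Hq] //; by apply IH.
move=> H; split; first by apply: H; left.
by apply/IH => q Hq; apply: H; right.
Qed.

Lemma in_map_In (T : eqType) (U : Type) (f : T -> U) (l : seq T) x :
  x \in l -> List.In (f x) (map f l).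
Proof.
elim: l => [|a l IH] //=; rewrite in_cons => /orP [/eqP ->|H]; [left|right]; auto.
Qed.

Lemma fImpP {C : finType} {O : Type} {ar : O -> nat} (M : model C ar) s p q :
  fsat (M:=M) s (fImp p q) <-> (fsat s p -> fsat s q).
Proof.
rewrite /fImp /=; split.
  by move=> H Hp; apply: NNPP => Hq; apply: H.
by move=> H [Hp Hq]; apply: Hq; apply: H.
Qed.

Lemma fIffP {C : finType} {O : Type} {ar : O -> nat} (M : model C ar) s p q :
  fsat (M:=M) s (fIff p q) <-> (fsat s p <-> fsat s q).
Proof.
split; first by move=> [/fImpP H1 /fImpP H2]; tauto.
by move=> H; split; apply/fImpP; tauto.
Qed.

Lemma diaP {C : finType} {O : Type} {ar : O -> nat} (M : model C ar) s z b :
  fsat (M:=M) s (dia z b) <-> exists s', [/\ s' \in sits M, sim z s' s & bsat s' b].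
Proof.
rewrite /dia /=; split.
  move=> H; apply: NNPP => H'; apply: H => s' H1 H2; apply/negP => Hb.
  by apply: H'; exists s'.
by move=> [s' [H1 H2 H3]] H; move: (H s' H1 H2); rewrite H3.
Qed.

Definition decb (P : Prop) : bool := if excluded_middle_informative P then true else false.
Lemma decbP P : decb P <-> P.
Proof. by rewrite /decb; case: excluded_middle_informative. Qed.
Lemma decbb (b : bool) : decb b = b.
Proof. by rewrite /decb; case: excluded_middle_informative; case: b. Qed.

Lemma bpeval_sat {C : finType} {O : Type} {ar : O -> nat} (M : model C ar) s a :
  bpeval (fun q => decb (fsat (M:=M) s q)) a = bsat s a.
Proof.
elim: a => [t1 t2|P ts|t1 t2|b IH|b IHb c IHc] /=; try by rewrite decbb.
  by rewrite IH.
by rewrite IHb IHc.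
Qed.

Lemma fpeval_sat {C : finType} {O : Type} {ar : O -> nat} (M : model C ar) s p :
  fpeval (fun q => decb (fsat (M:=M) s q)) p <-> fsat s p.
Proof.
elim: p => [a|z t|q IH|q IHq r IHr|z a] /=.
  by rewrite bpeval_sat.
  exact: decbP.
  move: IH; case: (fpeval _ q) => /= IH; intuition.
  move: IHq IHr; case: (fpeval _ q); case: (fpeval _ r) => /= IHq IHr; intuition.
exact: decbP.
Qed.

Lemma bsat_subst {C : finType} {O : Type} {ar : O -> nat} (M : model C ar) s s' t1 t2 a :
  (forall u, Defs.tval s (if u == t2 then t1 else u) = Defs.tval s' u) ->
  bsat (M:=M) s (bsubst t1 t2 a) = bsat s' a.
Proof.
move=> H; elim: a => [u1 u2|P ts|u1 u2|b IH|b IHb c IHc] /=.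
  by rewrite !H.
  f_equal; apply: val_inj => /=; rewrite -map_comp; apply: eq_map => u /=; exact: H.
  by rewrite !H.
  by rewrite IH.
  by rewrite IHb IHc.
Qed.

Lemma bsat_agree {C : finType} {O : Type} {ar : O -> nat} (M : model C ar) s s' a :
  (forall u, u \in bterms a -> Defs.tval s u = Defs.tval s' u) ->
  bsat (M:=M) s a = bsat s' a.
Proof.
elim: a => [u1 u2|P ts|u1 u2|b IH|b IHb c IHc] /= H.
  by rewrite !H // !inE eqxx ?orbT.
  f_equal; apply: val_inj => /=; apply/eq_in_map => u Hu; exact: H.
  by rewrite !H // !inE eqxx ?orbT.
  by rewrite IH.
  rewrite IHb ?IHc // => u Hu; apply: H; rewrite mem_cat Hu ?orbT //.
Qed.

Lemma bsat_Dn {C : finType} {O : Type} {ar : O -> nat} (M : model C ar) s n t1 t2 :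
  bsat (M:=M) s (Dn ar n t1 t2) = Dset n (Defs.tval s t1) (Defs.tval s t2).
Proof.
elim: n t2 => [|n IH] t2 /=; first by [].
rewrite negb_and !negbK IH; congr (_ || _).
rewrite bsat_bigOr has_map; apply/hasP/existsP.
  move=> [u _]; rewrite /= IH negb_and !negbK => H; by exists (Defs.tval s u).
move=> [u /andP [H1 H2]]; have [c Hc] := IC_named u.
exists (TC c); first by rewrite mem_enum.
by rewrite /= IH negb_and !negbK /= Hc H1.
Qed.

Lemma Dset_refl {C : finType} {O : Type} {ar : O -> nat} (M : model C ar) n (d : dom M) :
  Dset n d d.
Proof. by elim: n => [|n IH] /=; rewrite ?eqxx ?IH. Qed.

Lemma kphi_inv {C : finType} {O : Type} {ar : O -> nat} (M : model C ar) s s' z As Bs :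
  s \in sits M -> s' \in sits M -> sim z s' s ->
  fsat (M:=M) s (kphi z As Bs) -> fsat s' (kphi z As Bs).
Proof.
move=> Hs Hs' Hsim /fsat_bigAnd H; apply/fsat_bigAnd => q.
have Hl := fun q Hq => H q (List.in_or_app _ _ _ (or_introl Hq)).
have Hr := fun q Hq => H q (List.in_or_app _ _ _ (or_intror Hq)).
move=> Hq; case: (List.in_app_or _ _ _ Hq) => /List.in_map_iff [x [<- Hx]].
  move=> s'' Hs'' H''; apply: (Hl (FK z x) (List.in_map _ _ _ Hx) s'' Hs'').
  exact: sim_trans Hs'' Hs' Hs H'' Hsim.
have [s'' [Hs'' H'' Hb]] := (diaP _ _ _).1 (Hr (dia z x) (List.in_map _ _ _ Hx)).
apply/diaP; exists s''; split => //.
exact: sim_trans Hs'' Hs Hs' H'' (sim_sym Hs' Hs Hsim).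
Qed.

Lemma key_ground {C : finType} {O : Type} {ar : O -> nat} (M : model C ar) k s s' z z' c a :
  ksight M k -> s \in sits M -> s' \in sits M -> sim z s' s -> z != z' -> IC M c = s' z' ->
  bsat (M:=M) s (bsubst (TC c) (TV z') a) = bsat s' a.
Proof.
move=> HM Hs Hs' Hsim Hne Hc; apply: bsat_subst => -[d|w] /=.
  by [].
case: eqP => [[->]|Hw] //=.
have -> : w = z.
  clear -Hne Hw; move: Hne Hw; case: w; case: z; case: z' => //= _ H; by case: H.
apply: (HM z s s' Hs Hs' (sim_sym Hs' Hs Hsim) z).
exact: Dset_refl.
Qed.

Lemma ground_sound {C : finType} {O : Type} {ar : O -> nat} (M : model C ar) k s (z z' : var) (T : {set C}) (a : bform C ar) :
  ksight M k -> s \in sits M -> z != z' ->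
  fsat (M:=M) s (fImp (KeqT ar z z' T)
        (fIff (FK z a) (FB (bBigAnd [seq bsubst (TC c) (TV z') a | c <- enum T])))).
Proof.
move=> HM Hs Hne; apply/fImpP => /fsat_bigAnd HK; apply/fIffP.
rewrite /= bsat_bigAnd all_map; split.
  move=> Ha; apply/allP => c Hc /=.
  have Hd := HK _ (List.in_or_app _ _ _ (or_introl (in_map_In (fun c : C => dia z (BEq ar (TV z') (TC c))) (l := enum T) (x := c) _))).
  have [s' [Hs' Hsim /= /eqP Hb]] := (diaP _ _ _).1 (Hd Hc).
  by rewrite (key_ground (k:=k) (s':=s') (z:=z)) // ?Hb //; apply: Ha.
move=> /allP Hall s' Hs' Hsim.
have [c Hc] := IC_named (s' z').
case: (boolP (c \in T)) => HcT.
  rewrite -(@key_ground _ _ _ M k s s' z z' c a) //.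
  by apply: (Hall c); rewrite mem_enum.
have Hd := HK _ (List.in_or_app _ _ _ (or_intror (in_map_In (fun c : C => FK z (BNeg (BEq ar (TV z') (TC c)))) (l := enum (~: T)) (x := c) _))).
have := Hd ltac:(by rewrite mem_enum inE) s' Hs' Hsim.
by rewrite /= Hc eqxx.
Qed.

Definition simE {C : finType} {O : Type} {ar : O -> nat} (M : model C ar) (z : var) :
  var -> {ffun var -> dom M} -> {ffun var -> dom M} -> Prop :=
  fun w s1 s2 => if w == z then s1 = s2 else sim w s1 s2.

Lemma simE_refl {C : finType} {O : Type} {ar : O -> nat} (M : model C ar) z :
  forall w s, s \in sits M -> @simE _ _ _ M z w s s.
Proof. by move=> w s Hs; rewrite /simE; case: (w == z) => //; apply: sim_refl. Qed.

Lemma simE_sym {C : finType} {O : Type} {ar : O -> nat} (M : model C ar) z :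
  forall w s s', s \in sits M -> s' \in sits M -> @simE _ _ _ M z w s s' -> @simE _ _ _ M z w s' s.
Proof. by move=> w s s' Hs Hs'; rewrite /simE; case: (w == z) => H; [by rewrite H | exact: sim_sym Hs Hs' H]. Qed.

Lemma simE_trans {C : finType} {O : Type} {ar : O -> nat} (M : model C ar) z :
  forall w s1 s2 s3, s1 \in sits M -> s2 \in sits M -> s3 \in sits M ->
    @simE _ _ _ M z w s1 s2 -> @simE _ _ _ M z w s2 s3 -> @simE _ _ _ M z w s1 s3.
Proof.
move=> w s1 s2 s3 H1 H2 H3; rewrite /simE; case: (w == z); first by move=> -> ->.
exact: sim_trans.
Qed.

Definition modM {C : finType} {O : Type} {ar : O -> nat} (M : model C ar) (z : var) : model C ar :=
  @Model C O ar (dom M) (dom_nonempty M) (@IR _ _ _ M) (@IR_serial _ _ _ M) (@IP _ _ _ M)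
    (IC M) (@IC_named _ _ _ M) (sits M) (sits_nonempty M) (@simE _ _ _ M z)
    (@simE_refl _ _ _ M z) (@simE_sym _ _ _ M z) (@simE_trans _ _ _ M z).

Lemma elim_sound {C : finType} {O : Type} {ar : O -> nat} k z z' As Bs (a b : bform C ar) :
  z != z' ->
  valid k (fImp (kphi z' As Bs) (fImp (FK z a) (FB b))) ->
  valid k (fImp (kphi z' As Bs) (fImp (FB a) (FB b))).
Proof.
move=> Hne IH M HM s Hs; apply/fImpP => Hk; apply/fImpP => Ha.
have HM' : ksight (modM M z) k.
  move=> w s1 s2 H1 H2; rewrite /= /simE; case: (w == z); first by move=> -> .
  exact: HM.
have Hne' : (z' == z) = false by rewrite eq_sym; apply: negbTE.
have := (fImpP _ _ _).1 (IH (modM M z) HM' s Hs).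
move=> H; have := (fImpP _ _ _).1 (H _); apply.
  move: Hk => /fsat_bigAnd HK; apply/fsat_bigAnd => q Hq.
  case: (List.in_app_or _ _ _ Hq) => /List.in_map_iff [x [Hx Hx']]; subst q.
    move=> s'' Hs'' /=; rewrite /simE Hne' => Hsim.
    by apply: (HK (FK z' x) Hq s'' Hs'' Hsim).
  have [s'' [Hs'' H'' Hb]] := (diaP _ _ _).1 (HK _ Hq).
  apply/diaP; exists s''; split => //=.
  by rewrite /simE Hne'.
move=> s'' Hs'' /=; rewrite /simE eqxx => ->; exact: Ha.
Qed.

Theorem fact7 (Cons : finType) (OPred : Type) (oarity : OPred -> nat)
  (HCons : 0 < #|Cons|) (k : nat) (p : form Cons oarity) :
  derivable k p -> valid k p.
Proof.
elim=> {p}.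
  move=> p Ht M HM s Hs; apply/fpeval_sat; exact: Ht.
  by move=> t M HM s Hs; rewrite /= eqxx.
  by move=> t1 t2 M HM s Hs; rewrite /= eq_sym andbN.
  move=> t1 t2 t3 M HM s Hs /=; apply/negP => /andP [/andP [/eqP -> /eqP ->]].
  by rewrite eqxx.
  move=> t1 t2 a M HM s Hs /=; apply/negP => /andP [/eqP He].
  rewrite (@bsat_subst _ _ _ M s s); first by case: (bsat s a).
  by move=> u; case: eqP => [->|].
  move=> p q _ IH1 _ IH2 M HM s Hs.
  exact: ((fImpP _ _ _).1 (IH1 M HM s Hs)) (IH2 M HM s Hs).
  move=> c M HM s Hs; rewrite /= bsat_bigOr has_map.
  have [d Hd] := IR_serial (IC M c); have [e He] := IC_named d.
  by apply/hasP; exists e; [rewrite mem_enum | rewrite /= He].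
  move=> z M HM s Hs; rewrite /= bsat_bigOr has_map.
  have [e He] := IC_named (s z).
  by apply/hasP; exists e; [rewrite mem_enum | rewrite /= He].
  move=> z t M HM s Hs; apply/fImpP; rewrite /= bsat_Dn => HD s' Hs' Hsim.
  case: t HD => [c|z'] //= HD.
  apply/esym; exact: (HM z s s' Hs Hs' (sim_sym Hs' Hs Hsim) z' HD).
  move=> z a b M HM s Hs; apply/fImpP => H1; apply/fImpP => H2 s' Hs' Hsim.
  move: (H1 s' Hs' Hsim) (H2 s' Hs' Hsim) => /=.
  by case: (bsat s' a); case: (bsat s' b).
  move=> z a M HM s Hs; apply/fImpP => H; exact: H s Hs (sim_refl z Hs).
  move=> z z' T a Hne M HM s Hs; exact: (@ground_sound _ _ _ M k s z z' T a HM Hs Hne).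
  move=> z As Bs a _ _ IH M HM s Hs; apply/fImpP => Hk s' Hs' Hsim.
  exact: (fImpP _ _ _).1 (IH M HM s' Hs') (kphi_inv Hs Hs' Hsim Hk).
  move=> z z' As Bs a b Hne _ _ IH; exact: (elim_sound Hne IH).
  move=> z t c M HM s Hs; apply/fImpP => Hc0; have Hc : Defs.tval s t = IC M c := eqP Hc0; apply/fIffP.
  split => H s' Hs' Hsim /=.
    by rewrite H // Hc eqxx.
  by have := H s' Hs' Hsim => /eqP ->; rewrite Hc.
  move=> z T a Hall M HM s Hs; apply/fImpP => -[/fsat_bigAnd HK Ha] s' Hs' Hsim.
  rewrite (@bsat_agree _ _ _ M s' s) //.
  move=> u Hu; have HuT : u \in T by apply: (allP Hall).
  have HIn : List.In (FKt oarity z u) [seq FKt oarity z t | t <- enum T].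
    by apply: in_map_In; rewrite mem_enum.
  exact: (HK (FKt oarity z u) HIn s' Hs' Hsim).
Qed.
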